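(* For integers $d\ge 3$ and $n\ge 1.5(d+1)$, $$m^*(n,d)\le \min_{2\le i\le \lceil n/2\rceil}\Big\{m^*\big(\lceil n/i\rceil,d\big)+i\cdot m^*\big(\lceil n/i\rceil,\lfloor d/2\rfloor\big)\Big\}.$$
   Context: For a binary matrix $M$ and a nonempty set $S$ of its columns, $S$ is a stopping set if the submatrix formed by $S$ has no row with exactly one $1$; the stopping distance $s(M)$ is the minimum size of a stopping set ($+\infty$ if $M$ has no stopping set). For a positive integer $d$, $M$ is $d$-decodable if $s(M)\ge d+1$. For positive integers $n,d$ (with $d$ possibly exceeding $n$), $m^*(n,d)$ is the minimum $m$ such that an $m\times n$ $d$-decodable binary matrix exists. *)

(* Defs.v *)
From mathcomp Require Import all_boot all_algebra.
Set Implicit Arguments. Unset Strict Implicit. Unset Printing Implicit Defensive.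

Definition stopping_set (m n : nat) (A : 'M[bool]_(m, n)) (S : {set 'I_n}) : bool :=
  (S != set0) && [forall i : 'I_m, #|[set j in S | A i j]| != 1%N].

(* A is d-decodable iff s(A) >= d+1, i.e. every stopping set has size >= d+1
   (vacuously true when there is no stopping set, s(A) = +oo). *)
Definition decodable (m n : nat) (A : 'M[bool]_(m, n)) (d : nat) : bool :=
  [forall S : {set 'I_n}, stopping_set A S ==> (d < #|S|)%N].

Definition has_decodable (n d m : nat) : bool :=
  [exists A : 'M[bool]_(m, n), decodable A d].

(* The identity matrix has no stopping set, so some d-decodable n-column matrix exists. *)
Lemma has_decodable_exists (n d : nat) : exists m, has_decodable n d m.
Proof.
exists n; apply/existsP; exists ((\matrix_(i < n, j < n) (i == j))%R).
apply/forallP => S; apply/implyP => /andP [/set0Pn [j jS] /forallP /(_ j)].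
suff -> : [set k in S | ((\matrix_(i < n, j < n) (i == j))%R : 'M[bool]_n) j k] = [set j] by rewrite cards1.
apply/setP => k; rewrite !inE mxE.
by rewrite eq_sym; case: eqP => [->|]; rewrite ?jS ?andbT ?andbF.
Qed.

Definition mstar (n d : nat) : nat := ex_minn (has_decodable_exists n d).

(* Main.v *)
Require Import Defs.
From mathcomp Require Import all_boot all_algebra.
From mathcomp Require Import zify.
Set Implicit Arguments. Unset Strict Implicit. Unset Printing Implicit Defensive.

Definition Af (m k : nat) (C : 'M[bool]_(m, k)) (r t : nat) : bool :=
  match (insub r : option 'I_m), (insub t : option 'I_k) with
  | Some a, Some b => C a b
  | _, _ => false
  end.

Lemma AfE m k (C : 'M[bool]_(m, k)) (a : 'I_m) (b : 'I_k) : Af C a b = C a b.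
Proof. by rewrite /Af !valK. Qed.

Lemma key (m k n : nat) (C : 'M[bool]_(m, k)) (g : 'I_n -> 'I_k)
  (X : {set 'I_n}) (P : 'I_m -> 'I_n -> bool) :
  {in X &, injective g} -> X != set0 ->
  (forall r, #|[set c in X | P r c]| != 1%N) ->
  (forall r c, c \in X -> P r c = C r (g c)) ->
  stopping_set C (g @: X) /\ #|g @: X| = #|X|.
Proof.
move=> ginj Xn Hc HP; split; last exact: card_in_imset.
apply/andP; split.
  case/set0Pn: Xn => x xX; apply/set0Pn; exists (g x); exact: imset_f.
apply/forallP => r.
have -> : [set t in g @: X | C r t] = g @: [set c in X | P r c].
  apply/setP => t; rewrite !inE; apply/andP/imsetP.
    case=> /imsetP [c cX ->] Hr; exists c => //; by rewrite inE cX HP.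
  case=> c; rewrite inE => /andP [cX Pc] ->; split; first exact: imset_f.
  by rewrite -HP.
rewrite card_in_imset //; move=> x y; rewrite !inE => /andP[xX _] /andP[yX _].
exact: ginj.
Qed.

Theorem theorem5p1 (n d : nat) :
  (3 <= d)%N -> (3 * (d + 1) <= 2 * n)%N ->
  forall i : nat, (2 <= i)%N -> (i <= (n + 1) %/ 2)%N ->
    (mstar n d <= mstar ((n + i.-1) %/ i) d
                  + i * mstar ((n + i.-1) %/ i) (d %/ 2))%N.
Proof.
move=> d3 dn i i2 _.
set k := (n + i.-1) %/ i.
have ipos : (0 < i)%N by lia.
have kpos : (0 < k)%N.
  rewrite /k divn_gt0 //; lia.
have nik : (n <= k * i)%N.
  have := divn_eq (n + i.-1) i; have := ltn_pmod (n + i.-1) ipos.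
  rewrite -/k; lia.
have blk : forall c : 'I_n, (c %/ k < i)%N.
  move=> c; rewrite ltn_divLR //; have := ltn_ord c; lia.
rewrite /mstar.
case: (ex_minnP (has_decodable_exists k d)) => mA /existsP [A HA] _.
case: (ex_minnP (has_decodable_exists k (d %/ 2))) => mB /existsP [B HB] _.
have mBpos : (0 < mB)%N.
  case: mB B HB => [|mB'] B HB //.
  have := forallP HB [set Ordinal kpos]; rewrite cards1.
  have -> : stopping_set B [set Ordinal kpos].
    apply/andP; split; first by apply/set0Pn; exists (Ordinal kpos); rewrite inE.
    by apply/forallP => -[].
  move=> /= H; have := divn_eq d 2; lia.
case: (ex_minnP (has_decodable_exists n d)) => m _ Hmin; apply: Hmin.
pose g (c : 'I_n) : 'I_k := Ordinal (ltn_pmod c kpos).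
pose M : 'M[bool]_(mA + i * mB, n) := (\matrix_(r, c) (if (r < mA)%N then Af A r (c %% k)
  else (c %/ k == (r - mA) %/ mB) && Af B ((r - mA) %% mB) (c %% k))%N)%R.
apply/existsP; exists M; apply/forallP => S; apply/implyP => HS.
have HS' := HS; case/andP: HS' => Sn /forallP Sr.
have ginj : forall X : {set 'I_n}, forall j,
   (forall c, c \in X -> c %/ k = j) -> {in X &, injective g}.
  move=> X j Hj x y xX yX /(congr1 val) /= E.
  apply/val_inj => /=.
  rewrite (divn_eq x k) (divn_eq y k) E (Hj _ xX) (Hj _ yX) //.
have [[c1 c1S [c2 c2S ne]] | same] :
  (exists2 c1, c1 \in S & exists2 c2, c2 \in S & c1 %/ k != c2 %/ k) \/
  (forall c1 c2, c1 \in S -> c2 \in S -> c1 %/ k = c2 %/ k).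
- case: (boolP [exists c1, exists c2, [&& c1 \in S, c2 \in S & c1 %/ k != c2 %/ k]]).
    case/existsP => c1 /existsP [c2 /and3P [h1 h2 h3]]; left; exists c1 => //; by exists c2.
  move=> H; right => c1 c2 h1 h2; apply/eqP; move: H; apply: contraNeq => h3.
  apply/existsP; exists c1; apply/existsP; exists c2; rewrite h1 h2 /=; by move: h3; rewrite eqb_id.
-
  have blkcard : forall j, (j < i)%N -> forall c0, c0 \in S -> c0 %/ k = j ->
      (d %/ 2 < #|[set c in S | c %/ k == j]|)%N.
    move=> j ji c0 c0S c0j.
    set X := [set c in S | c %/ k == j].
    have XJ : forall c, c \in X -> c %/ k = j by move=> c; rewrite inE => /andP [_ /eqP].
    have rlt : forall r' : 'I_mB, (j * mB + r' < i * mB)%N.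
      move=> r'; have := ltn_ord r'; nia.
    have X0 : X != set0 by apply/set0Pn; exists c0; rewrite inE c0S c0j eqxx.
    have Xc : forall r' : 'I_mB, #|[set c in X | M (rshift mA (Ordinal (rlt r'))) c]| != 1%N.
      move=> r'; have := Sr (rshift mA (Ordinal (rlt r'))).
      suff -> : [set c in X | M (rshift mA (Ordinal (rlt r'))) c] =
                [set c in S | M (rshift mA (Ordinal (rlt r'))) c] by [].
      apply/setP => c; rewrite !inE mxE /=.
      rewrite ltnNge leq_addr /= addKn divnMDl // modnMDl (divn_small (ltn_ord r')) (modn_small (ltn_ord r')).
      rewrite addn0; case: (c \in S) => //=.
      by case: (c %/ k == j) => //=; rewrite andbF.
    have XP : forall (r' : 'I_mB) c, c \in X -> M (rshift mA (Ordinal (rlt r'))) c = B r' (g c).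
      move=> r' c; rewrite inE => /andP [_ /eqP cj]; rewrite mxE /=.
      rewrite ltnNge leq_addr /= addKn divnMDl // modnMDl (divn_small (ltn_ord r')) (modn_small (ltn_ord r')).
      by rewrite addn0 cj eqxx /=; exact: (AfE B r' (g c)).
    have [st <-] := @key mB k n B g X (fun r' c => M (rshift mA (Ordinal (rlt r'))) c)
       (ginj X j XJ) X0 Xc XP.
    by have := forallP HB (g @: X); rewrite st.
  have h1 := blkcard _ (blk c1) c1 c1S erefl.
  have h2 := blkcard _ (blk c2) c2 c2S erefl.
  have sub : [set c in S | c %/ k == c1 %/ k] :|: [set c in S | c %/ k == c2 %/ k] \subset S.
    by apply/subsetP => c; rewrite !inE => /orP [] /andP [].
  have := subset_leq_card sub; rewrite cardsU.
  have -> : [set c in S | c %/ k == c1 %/ k] :&: [set c in S | c %/ k == c2 %/ k] = set0.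
    apply/setP => c; rewrite !inE; apply/negP => /andP [/andP [_ /eqP a] /andP [_ /eqP b]].
    by rewrite -a b eqxx in ne.
  rewrite cards0 subn0 => h3; have := divn_eq d 2; have := ltn_pmod d (isT : (0 < 2)%N); lia.
-
  case/set0Pn: Sn => c0 c0S.
  have S0 : S != set0 by apply/set0Pn; exists c0.
  have Sc : forall r : 'I_mA, #|[set c in S | M (lshift (i * mB) r) c]| != 1%N.
    by move=> r; apply: Sr.
  have SP : forall (r : 'I_mA) c, c \in S -> M (lshift (i * mB) r) c = A r (g c).
    move=> r c _; rewrite mxE /= ltn_ord.
    exact: (AfE A r (g c)).
  have [st <-] := @key mA k n A g S (fun r c => M (lshift (i * mB) r) c)
     (ginj S (c0 %/ k) (fun c cS => same c c0 cS c0S)) S0 Sc SP.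
  by have := forallP HA (g @: S); rewrite st.
Qed.
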